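(* Fix $\alpha\in\mathbb C$ with $|\alpha|\le1$ and let $\mathcal H$, $N_\alpha$, $T_z$, $A_\alpha$, $B=0$, $P$ be as follows: $\mathcal H=\ell^2(\mathbb C^2)^{\oplus 4}$, $N_\alpha(c_0,c_1,\dots)=(H_1c_0,0,0,\dots)$ with $H_1=\begin{pmatrix}0&\alpha\\0&0\end{pmatrix}$, $A_\alpha(x_1,x_2,x_3,x_4)=(0,0,N_\alpha x_3,0)$, $P(x_1,x_2,x_3,x_4)=(0,0,T_zx_2,x_1)$. Then $D_{P^*}=(I-PP^* )^{1/2}$ is the orthogonal projection $I\oplus I\oplus(I-T_zT_z^* )\oplus 0$ onto $\mathcal D_{P^*}=\ell^2(\mathbb C^2)\oplus\ell^2(\mathbb C^2)\oplus\ker T_z^*\oplus\{0\}$. Let $G_1\in\mathcal B(\mathcal D_{P^*})$ be $G_1(x_1,x_2,x_3,0)=(0,0,N_\alpha^*x_3,0)$ and $G_2=0$. Then $A_\alpha^*-BP^*=D_{P^*}G_1D_{P^*}$ and $B^*-A_\alpha P^*=D_{P^*}G_2D_{P^*}$. Moreover, on $\mathcal K'=\mathcal H\oplus\mathcal D_{P^*}\oplus\mathcal D_{P^*}\oplus\cdots$ the operators $$W_1(h,d_1,d_2,\dots)=(A_\alpha^*h,\;G_1^*D_{P^*}h+G_1d_1,\;G_1^*d_1+G_1d_2,\;G_1^*d_2+G_1d_3,\dots),$$ $$W_2(h,d_1,d_2,\dots)=(B^*h,\;G_1D_{P^*}h,\;G_1^*D_{P^*}h+G_1d_1,\;G_1^*d_1+G_1d_2,\dots),$$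 $$W_3(h,d_1,d_2,\dots)=(P^*h,\;0,\;D_{P^*}h,\;d_1,\;d_2,\dots)$$ form a tetrablock isometric dilation of $(A_\alpha^*,B^*,P^* )$.
   Context: $\ell^2(\mathbb C^2)=\mathbb C^2\oplus\mathbb C^2\oplus\cdots$ and $T_z(e_0,e_1,\dots)=(0,e_0,e_1,\dots)$. The closed tetrablock is $\overline{\mathbb E}=\{(a_{11},a_{22},\det M): M=(a_{ij})\in\mathbb M_2(\mathbb C),\ \|M\|\le1\}$ and $b\mathbb E=\{(a_{11},a_{22},\det M): M\text{ unitary}\}$. A tetrablock unitary is a commuting triple of normal operators with Taylor joint spectrum in $b\mathbb E$; a tetrablock isometry is the restriction of a tetrablock unitary to a joint invariant subspace. It is known that a commuting triple $(V_1,V_2,V_3)$ is a tetrablock isometry iff $V_3$ is an isometry, $\|V_1\|\le1$, $\|V_2\|\le1$ and $V_1=V_2^*V_3$. A tetrablock isometric dilation of a commuting triple $(X,Y,Z)$ on $\mathcal H$ is a tetrablock isometry $(W_1,W_2,W_3)$ on a Hilbert space $\mathcal K'\supseteq\mathcal H$ with $W_1^*|_{\mathcal H}=X^*$, $W_2^*|_{\mathcal H}=Y^*$, $W_3^*|_{\mathcal H}=Z^*$. *)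

(* Defs.v *)
From HB Require Import structures.
From mathcomp Require Import all_boot all_order all_algebra.
From mathcomp Require Import all_classical all_reals all_analysis.
From mathcomp Require Import complex.
Import Order.TTheory GRing.Theory Num.Theory.
Import numFieldNormedType.Exports.

Set Implicit Arguments.
Unset Strict Implicit.
Unset Printing Implicit Defensive.

Local Open Scope ring_scope.
Local Open Scope complex_scope.

Section TetraDefs.
Context {R : realType}.

Definition cvgC (u : nat -> R[i]) : Prop :=
  cvgn (series (fun n => complex.Re (u n))) /\
  cvgn (series (fun n => complex.Im (u n))).

Definition sumC (u : nat -> R[i]) : R[i] :=
  Complex (limn (series (fun n => complex.Re (u n))))
          (limn (series (fun n => complex.Im (u n)))).

(* The spaces.  C^2 = 'I_2 -> C ; l2(C^2) = sequences (c_0, c_1, ...)  *)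
(* of C^2 vectors ; H = l2(C^2)^{(+)4} ; K' = H (+) D (+) D (+) ...     *)
(* (elements of K' are sequences (k_0, k_1, ...) of elements of H).    *)
Definition C2 := 'I_2 -> R[i].
Definition L2 := nat -> C2.
Definition Hs := 'I_4 -> L2.
Definition Ks := nat -> Hs.

Definition ipC2 (u v : C2) : R[i] := \sum_(j < 2) u j * (v j)^*.

Definition inL2 (x : L2) : Prop := cvgC (fun n => ipC2 (x n) (x n)).
Definition ipL2 (x y : L2) : R[i] := sumC (fun n => ipC2 (x n) (y n)).

Definition inH (x : Hs) : Prop := forall i, inL2 (x i).
Definition ipH (x y : Hs) : R[i] := \sum_(i < 4) ipL2 (x i) (y i).

(* the four summands of H (paper numbering x_1, x_2, x_3, x_4) *)
Definition cmp1 : 'I_4 := @Ordinal 4 0 isT.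
Definition cmp2 : 'I_4 := @Ordinal 4 1 isT.
Definition cmp3 : 'I_4 := @Ordinal 4 2 isT.
Definition cmp4 : 'I_4 := @Ordinal 4 3 isT.

(* Generic operator-theoretic notions on a space given by a membership *)
(* predicate inV and an inner product ip (linear in the first slot).   *)
Section Generic.
Context {V : Type} (inV : V -> Prop) (ip : V -> V -> R[i]).

Definition is_adjoint (T Ts : V -> V) : Prop :=
  (forall x, inV x -> inV (Ts x)) /\
  (forall x y, inV x -> inV y -> ip (T x) y = ip x (Ts y)).

Definition positive_op (D : V -> V) : Prop :=
  is_adjoint D D /\ (forall x, inV x -> 0 <= ip (D x) x).

Definition orth_projection_onto (Q : V -> V) (S : V -> Prop) : Prop :=
  is_adjoint Q Q /\ (forall x, inV x -> Q (Q x) = Q x) /\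
  (forall y, S y <-> exists2 x, inV x & Q x = y).

(* The characterization of tetrablock isometries recalled in the      *)
(* V1 = V2^* V3 (written through the defining identity of the adjoint of V2).   *)
Definition tetrablock_isometry (V1 V2 V3 : V -> V) : Prop :=
  (forall x, inV x -> inV (V1 x) /\ inV (V2 x) /\ inV (V3 x)) /\
  (forall x, inV x -> V1 (V2 x) = V2 (V1 x) /\
                      V1 (V3 x) = V3 (V1 x) /\
                      V2 (V3 x) = V3 (V2 x)) /\
  (forall x, inV x -> ip (V3 x) (V3 x) = ip x x) /\
  (forall x, inV x -> ip (V1 x) (V1 x) <= ip x x /\
                      ip (V2 x) (V2 x) <= ip x x) /\
  (forall x y, inV x -> inV y -> ip (V1 x) y = ip (V3 x) (V2 y)).
End Generic.

(* Tetrablock isometric dilation of a triple (X1,X2,X3) on (W, inW, ipW) *)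
(* to (W1,W2,W3) on (K, inK, ipK), W sitting inside K through the      *)
(* isometric embedding emb.  Y1,Y2,Y3 are the adjoints X1^*,X2^*,X3^*; *)
(* the condition W_i^*|_H = X_i^* is written through the defining      *)
(* identity of the adjoint W_i^*: <W_i k, h> = <k, X_i^* h>.           *)
Definition tetrablock_isometric_dilation {W K : Type}
  (inW : W -> Prop) (ipW : W -> W -> R[i])
  (inK : K -> Prop) (ipK : K -> K -> R[i]) (emb : W -> K)
  (Y1 Y2 Y3 : W -> W) (W1 W2 W3 : K -> K) : Prop :=
  tetrablock_isometry inK ipK W1 W2 W3 /\
  (forall h, inW h -> inK (emb h)) /\
  (forall h h', inW h -> inW h' -> ipK (emb h) (emb h') = ipW h h') /\
  (forall k h, inK k -> inW h ->
     ipK (W1 k) (emb h) = ipK k (emb (Y1 h)) /\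
     ipK (W2 k) (emb h) = ipK k (emb (Y2 h)) /\
     ipK (W3 k) (emb h) = ipK k (emb (Y3 h))).

Definition zeroop {V : zmodType} : V -> V := fun _ => 0.

Definition Tz (c : L2) : L2 := fun n => if n is n'.+1 then c n' else 0.

Definition H1 (alpha : R[i]) (v : C2) : C2 :=
  fun j => if nat_of_ord j == 0%N then alpha * v (@Ordinal 2 1 isT) else 0.

Definition Nalpha (alpha : R[i]) (c : L2) : L2 :=
  fun n => if n == 0%N then H1 alpha (c 0%N) else 0.

Definition Aalpha (alpha : R[i]) (x : Hs) : Hs :=
  fun i => if nat_of_ord i == 2%N then Nalpha alpha (x cmp3) else 0.

Definition Pop (x : Hs) : Hs :=
  fun i => match nat_of_ord i with
           | 2 => Tz (x cmp2)
           | 3 => x cmp1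
           | _ => 0 end.

Definition Bop : Hs -> Hs := zeroop.

(* the projection I (+) I (+) (I - T_z T_z^* ) (+) 0, Tzs = T_z^* *)
Definition Qproj (Tzs : L2 -> L2) (x : Hs) : Hs :=
  fun i => match nat_of_ord i with
           | 0 => x cmp1
           | 1 => x cmp2
           | 2 => x cmp3 - Tz (Tzs (x cmp3))
           | _ => 0 end.

(* the space l2(C^2) (+) l2(C^2) (+) ker T_z^* (+) {0}, Tzs = T_z^* *)
Definition inDP (Tzs : L2 -> L2) (x : Hs) : Prop :=
  inH x /\ Tzs (x cmp3) = 0 /\ x cmp4 = 0.

(* G_1 (x1,x2,x3,0) = (0,0,N_alpha^* x3,0), Ns = N_alpha^* ; G_2 = 0 *)
Definition G1op (Ns : L2 -> L2) (x : Hs) : Hs :=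
  fun i => if nat_of_ord i == 2%N then Ns (x cmp3) else 0.
Definition G2op : Hs -> Hs := zeroop.

Definition inK (Tzs : L2 -> L2) (k : Ks) : Prop :=
  inH (k 0%N) /\ (forall n, inDP Tzs (k n.+1)) /\
  cvgC (fun n => ipH (k n) (k n)).
Definition ipK (k l : Ks) : R[i] := sumC (fun n => ipH (k n) (l n)).

Definition embK (h : Hs) : Ks := fun n => if n is 0 then h else 0.

(* d_0 := D_{P*} h, d_n := k_n (n >= 1) *)
Definition dprev (Dp : Hs -> Hs) (k : Ks) (n : nat) : Hs :=
  if n is 1 then Dp (k 0%N) else k n.-1.

Definition W1op (As G1 G1s Dp : Hs -> Hs) (k : Ks) : Ks :=
  fun n => if n is 0 then As (k 0%N)
           else G1s (dprev Dp k n) + G1 (k n).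

Definition W2op (Bs G1 G1s Dp : Hs -> Hs) (k : Ks) : Ks :=
  fun n => match n with
           | 0 => Bs (k 0%N)
           | 1 => G1 (Dp (k 0%N))
           | m.+1 => G1s (dprev Dp k m) + G1 (k m)
           end.

Definition W3op (Ps Dp : Hs -> Hs) (k : Ks) : Ks :=
  fun n => match n with
           | 0 => Ps (k 0%N)
           | 1 => 0
           | m.+1 => dprev Dp k m
           end.

End TetraDefs.

(* Main.v *)
Require Import Defs.
From HB Require Import structures.
From mathcomp Require Import all_boot all_order all_algebra.
From mathcomp Require Import all_classical all_reals all_analysis.
From mathcomp Require Import complex.
From mathcomp Require Import ring lra.
Import Order.TTheory GRing.Theory Num.Theory.
Import numFieldNormedType.Exports.
Local Open Scope ring_scope.
Local Open Scope complex_scope.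
Lemma subfE (T : Type) (V : zmodType) (f g : T -> V) x : (f - g) x = f x - g x.
Proof. by []. Qed.
Lemma addfE (T : Type) (V : zmodType) (f g : T -> V) x : (f + g) x = f x + g x.
Proof. by []. Qed.
Lemma oppfE (T : Type) (V : zmodType) (f : T -> V) x : (- f) x = - f x.
Proof. by []. Qed.
Lemma zerofE (T : Type) (V : zmodType) x : (0 : T -> V) x = 0.
Proof. by []. Qed.

Section Main.
Variable R : realType.
Lemma ReM (x y : R[i]) : complex.Re (x * y) = complex.Re x * complex.Re y - complex.Im x * complex.Im y.
Proof. by case: x => a b; case: y => c d. Qed.
Lemma ImM (x y : R[i]) : complex.Im (x * y) = complex.Re x * complex.Im y + complex.Im x * complex.Re y.
Proof. by case: x => a b; case: y => c d. Qed.
Lemma ReD (x y : R[i]) : complex.Re (x + y) = complex.Re x + complex.Re y.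
Proof. by case: x => a b; case: y => c d. Qed.
Lemma ImD (x y : R[i]) : complex.Im (x + y) = complex.Im x + complex.Im y.
Proof. by case: x => a b; case: y => c d. Qed.
Lemma ReN (x : R[i]) : complex.Re (- x) = - complex.Re x.
Proof. by case: x => a b. Qed.
Lemma ImN (x : R[i]) : complex.Im (- x) = - complex.Im x.
Proof. by case: x => a b. Qed.
Lemma Rec (x : R[i]) : complex.Re (x^*) = complex.Re x.
Proof. by case: x => a b. Qed.
Lemma Imc (x : R[i]) : complex.Im (x^*) = - complex.Im x.
Proof. by case: x => a b. Qed.
Lemma Re0 : complex.Re (0 : R[i]) = 0. Proof. by []. Qed.
Lemma Im0 : complex.Im (0 : R[i]) = 0. Proof. by []. Qed.
Lemma ReC (r : R) : complex.Re (r%:C) = r. Proof. by []. Qed.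
Lemma ImC (r : R) : complex.Im (r%:C) = 0. Proof. by []. Qed.
Lemma cplxE (x y : R[i]) : complex.Re x = complex.Re y -> complex.Im x = complex.Im y -> x = y.
Proof. by case: x => a b; case: y => c d /= -> ->. Qed.
Implicit Types f g : nat -> R.

Definition cvgS f := cvgn (series f).
Definition sumS f := limn (series f).

Lemma cvgS_add {f g} : cvgS f -> cvgS g -> cvgS (fun n => f n + g n).
Proof. exact: is_cvg_seriesD. Qed.
Lemma sumS_add f g : cvgS f -> cvgS g -> sumS (fun n => f n + g n) = sumS f + sumS g.
Proof. exact: lim_seriesD. Qed.
Lemma cvgS_opp {f} : cvgS f -> cvgS (fun n => - f n).
Proof. by move=> h; rewrite /cvgS (_ : (fun n => - f n) = - f) // is_cvg_seriesN. Qed.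
Lemma sumS_opp f : cvgS f -> sumS (fun n => - f n) = - sumS f.
Proof. exact: lim_seriesN. Qed.
Lemma cvgS_sub {f g} : cvgS f -> cvgS g -> cvgS (fun n => f n - g n).
Proof. by move=> a b; apply: cvgS_add => //; apply: cvgS_opp. Qed.
Lemma sumS_sub f g : cvgS f -> cvgS g -> sumS (fun n => f n - g n) = sumS f - sumS g.
Proof. by move=> a b; rewrite sumS_add ?sumS_opp //; apply: cvgS_opp. Qed.
Lemma cvgS_scale {f} c : cvgS f -> cvgS (fun n => c * f n).
Proof. by move=> h; exact: (@is_cvg_seriesZ _ _ c h). Qed.
Lemma sumS_scale f c : cvgS f -> sumS (fun n => c * f n) = c * sumS f.
Proof. by move=> h; exact: (lim_seriesZ c h). Qed.

Lemma seriesS_shift f n : series f n.+1 = f 0%N + series (fun k => f k.+1) n.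
Proof. by rewrite /series /= big_nat_recl. Qed.

Lemma cvgS_shift f : cvgS f <-> cvgS (fun n => f n.+1).
Proof.
rewrite /cvgS; split => h.
- have : cvgn (fun n => series f n.+1) by move: h => /cvg_ex[l hl]; apply/cvg_ex; exists l; rewrite cvg_shiftS.
  move=> h2; have -> : series (fun k => f k.+1) = fun n => series f n.+1 - f 0%N.
    by apply/funext => n; rewrite seriesS_shift addrC addKr.
  by apply: is_cvgB => //; apply: is_cvg_cst.
- have h2 : cvgn (fun n => series f n.+1).
    rewrite (_ : (fun n => series f n.+1) = fun n => f 0%N + series (fun k => f k.+1) n).
      by apply: is_cvgD => //; apply: is_cvg_cst.
    by apply/funext => n; rewrite seriesS_shift.
  by move: h2 => /cvg_ex[l hl]; apply/cvg_ex; exists l; rewrite -cvg_shiftS.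
Qed.

Section SetScope.
Local Open Scope classical_set_scope.
Lemma sumS_shift f : cvgS f -> sumS f = f 0%N + sumS (fun n => f n.+1).
Proof.
move=> h; have h' := (cvgS_shift f).1 h.
rewrite /sumS; have : (fun n => series f n.+1) @ \oo --> f 0%N + limn (series (fun k => f k.+1)).
  rewrite (_ : (fun n => series f n.+1) = fun n => f 0%N + series (fun k => f k.+1) n).
    by apply: cvgD; [apply: cvg_cst | apply: h'].
  by apply/funext => n; rewrite seriesS_shift.
by rewrite cvg_shiftS => /cvg_lim ->.
Qed.
End SetScope.

Lemma cvgS_zero : cvgS (fun _ => 0 : R).
Proof. rewrite /cvgS (_ : series _ = fun _ => 0); first exact: is_cvg_cst.
by apply/funext => n; rewrite /series /= big1. Qed.
Lemma sumS_zero : sumS (fun _ => 0 : R) = 0.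
Proof. rewrite /sumS (_ : series _ = fun _ => 0); first exact: lim_cst.
by apply/funext => n; rewrite /series /= big1. Qed.

Lemma cvgS_ext f g : (forall n, f n = g n) -> cvgS f -> cvgS g.
Proof. by move=> e; rewrite (_ : f = g) //; apply/funext. Qed.
Lemma sumS_ext f g : (forall n, f n = g n) -> sumS f = sumS g.
Proof. by move=> e; rewrite (_ : f = g) //; apply/funext. Qed.

Lemma cvgS_single f m : (forall n, n != m -> f n = 0) -> cvgS f /\ sumS f = f m.
Proof.
elim: m f => [|m IH] f hf.
  have z : forall n, f n.+1 = 0 by move=> n; apply: hf.
  have c : cvgS (fun n => f n.+1).
    by apply: (@cvgS_ext (fun _ => 0)); [move=> n /=; rewrite z | exact: cvgS_zero].
  have c' := proj2 (cvgS_shift f) c.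
  split => //; rewrite sumS_shift //.
  by rewrite (@sumS_ext _ (fun _ => 0)) ?sumS_zero ?addr0 // => n; rewrite z.
have [c e] := IH (fun n => f n.+1) (fun n hn => hf n.+1 hn).
have c' := proj2 (cvgS_shift f) c.
by split => //; rewrite sumS_shift // hf // add0r.
Qed.

Lemma cvgS_le {f} g : (forall n, 0 <= f n) -> (forall n, f n <= g n) -> cvgS g -> cvgS f.
Proof.
move=> f0 fg; apply: series_le_cvg => // n; exact: le_trans (fg n).
Qed.

Lemma cvgS_dom {f g} : (forall n, `|f n| <= g n) -> cvgS g -> cvgS f.
Proof.
move=> fg cg.
have c2 : cvgS (fun n => f n + g n).
  apply: (@cvgS_le _ (fun n => g n + g n)).
  - move=> n; have := fg n; rewrite ler_norml; lra.
  - move=> n; have := fg n; rewrite ler_norml; lra.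
  exact: cvgS_add.
apply: (@cvgS_ext (fun n => (f n + g n) - g n)); first by move=> n; rewrite addrK.
exact: cvgS_sub.
Qed.

Lemma sumS_le f g : cvgS f -> cvgS g -> (forall n, f n <= g n) -> sumS f <= sumS g.
Proof. exact: lim_series_le. Qed.

Lemma sumS_le_partial f g : cvgS f -> cvgS g -> (forall N, series f N <= series g N) -> sumS f <= sumS g.
Proof. by move=> cf cg h; apply: ler_lim => //; near=> N; apply: h. Unshelve. all: by end_near. Qed.

Lemma cvgS_bounded f M : (forall n, 0 <= f n) -> (forall N, series f N <= M) -> cvgS f.
Proof.
move=> f0 hM; apply: nondecreasing_is_cvgn.
  by apply: (nondecreasing_series (P := predT) (m := 0%N)) => n _ _; apply: f0.
by exists M => _ [n _ <-]; apply: hM.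
Qed.

Lemma sumS_le_bound f M : cvgS f -> (forall N, series f N <= M) -> sumS f <= M.
Proof. by move=> cf h; apply: limr_le => //; near=> N; apply: h. Unshelve. all: by end_near. Qed.

Lemma series_le_sumS f N : (forall n, 0 <= f n) -> cvgS f -> series f N <= sumS f.
Proof.
move=> f0 cf; apply: nondecreasing_cvgn_le => //.
by apply: (nondecreasing_series (P := predT) (m := 0%N)) => n _ _; apply: f0.
Qed.

Lemma term_le_sumS f m : (forall n, 0 <= f n) -> cvgS f -> f m <= sumS f.
Proof.
move=> f0 cf; apply: le_trans (@series_le_sumS f m.+1 f0 cf).
rewrite /series /= big_nat_recr //= lerDr; apply: sumr_ge0 => i _; exact: f0.
Qed.

Lemma sumS_ge0 f : (forall n, 0 <= f n) -> cvgS f -> 0 <= sumS f.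
Proof. by move=> f0 cf; exact: le_trans (f0 0%N) (@term_le_sumS f 0 f0 cf). Qed.

Lemma sumS_eq0 f : (forall n, 0 <= f n) -> cvgS f -> sumS f = 0 -> forall n, f n = 0.
Proof. by move=> f0 cf e n; apply/le_anti; rewrite f0 andbT -e term_le_sumS. Qed.

Section CS.
Implicit Types u v : nat -> R[i].

Lemma cvgC_iff u : cvgC u <-> cvgS (fun n => complex.Re (u n)) /\ cvgS (fun n => complex.Im (u n)).
Proof. by []. Qed.
Lemma sumC_Re u : complex.Re (sumC u) = sumS (fun n => complex.Re (u n)).
Proof. by []. Qed.
Lemma sumC_Im u : complex.Im (sumC u) = sumS (fun n => complex.Im (u n)).
Proof. by []. Qed.

Lemma cvgC_ext u v : (forall n, u n = v n) -> cvgC u -> cvgC v.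
Proof. by move=> e; rewrite (_ : u = v) //; apply/funext. Qed.
Lemma sumC_ext u v : (forall n, u n = v n) -> sumC u = sumC v.
Proof. by move=> e; rewrite (_ : u = v) //; apply/funext. Qed.

Lemma cvgC_add u v : cvgC u -> cvgC v -> cvgC (fun n => u n + v n).
Proof.
move=> [a b] [c d]; split.
  by apply: (@cvgS_ext (fun n => complex.Re (u n) + complex.Re (v n))) => [n|]; rewrite ?ReD //; apply: cvgS_add.
by apply: (@cvgS_ext (fun n => complex.Im (u n) + complex.Im (v n))) => [n|]; rewrite ?ImD //; apply: cvgS_add.
Qed.
Lemma sumC_add u v : cvgC u -> cvgC v -> sumC (fun n => u n + v n) = sumC u + sumC v.
Proof.
move=> [a b] [c d]; apply: cplxE.
  rewrite ReD !sumC_Re -sumS_add //.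
  by apply: sumS_ext => n; rewrite ReD.
rewrite ImD !sumC_Im -sumS_add //.
by apply: sumS_ext => n; rewrite ImD.
Qed.

Lemma cvgC_mul u c : cvgC u -> cvgC (fun n => c * u n).
Proof.
move=> [a b]; split.
  apply: (@cvgS_ext (fun n => complex.Re c * complex.Re (u n) - complex.Im c * complex.Im (u n))) => [n|]; rewrite ?ReM //.
  by apply: cvgS_sub; apply: cvgS_scale.
apply: (@cvgS_ext (fun n => complex.Re c * complex.Im (u n) + complex.Im c * complex.Re (u n))) => [n|]; rewrite ?ImM //.
by apply: cvgS_add; apply: cvgS_scale.
Qed.
Lemma sumC_mul u c : cvgC u -> sumC (fun n => c * u n) = c * sumC u.
Proof.
move=> [a b]; apply: cplxE; rewrite ?ReM ?ImM ?sumC_Re ?sumC_Im.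
  rewrite (@sumS_ext _ (fun n => complex.Re c * complex.Re (u n) - complex.Im c * complex.Im (u n))); last by move=> n; rewrite ReM.
  by rewrite sumS_sub ?sumS_scale //; apply: cvgS_scale.
rewrite (@sumS_ext _ (fun n => complex.Re c * complex.Im (u n) + complex.Im c * complex.Re (u n))); last by move=> n; rewrite ImM.
by rewrite sumS_add ?sumS_scale //; apply: cvgS_scale.
Qed.

Lemma cvgC_opp u : cvgC u -> cvgC (fun n => - u n).
Proof. move=> h; apply: (@cvgC_ext (fun n => (-1) * u n)) => [n|]; rewrite ?mulN1r //; exact: cvgC_mul. Qed.
Lemma sumC_opp u : cvgC u -> sumC (fun n => - u n) = - sumC u.
Proof. move=> h; rewrite (@sumC_ext _ (fun n => (-1) * u n)) ?sumC_mul ?mulN1r // => n; by rewrite mulN1r. Qed.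
Lemma cvgC_sub u v : cvgC u -> cvgC v -> cvgC (fun n => u n - v n).
Proof. by move=> a b; apply: cvgC_add => //; apply: cvgC_opp. Qed.
Lemma sumC_sub u v : cvgC u -> cvgC v -> sumC (fun n => u n - v n) = sumC u - sumC v.
Proof. by move=> a b; rewrite sumC_add ?sumC_opp //; apply: cvgC_opp. Qed.

Lemma cvgC_conj u : cvgC u -> cvgC (fun n => (u n)^*).
Proof.
move=> [a b]; split.
  by apply: (@cvgS_ext (fun n => complex.Re (u n))) => [n|]; rewrite ?Rec.
by apply: (@cvgS_ext (fun n => - complex.Im (u n))) => [n|]; rewrite ?Imc //; apply: cvgS_opp.
Qed.
Lemma sumC_conj u : cvgC u -> sumC (fun n => (u n)^*) = (sumC u)^*.
Proof.
move=> [a b]; apply: cplxE; rewrite ?Rec ?Imc ?sumC_Re ?sumC_Im.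
  by apply: sumS_ext => n; rewrite Rec.
by rewrite -sumS_opp //; apply: sumS_ext => n; rewrite Imc.
Qed.

Lemma cvgC_shift u : cvgC u <-> cvgC (fun n => u n.+1).
Proof.
split => -[a b]; split.
- exact: (proj1 (cvgS_shift _) a).
- exact: (proj1 (cvgS_shift _) b).
- exact: (proj2 (cvgS_shift (fun n => complex.Re (u n))) a).
- exact: (proj2 (cvgS_shift (fun n => complex.Im (u n))) b).
Qed.
Lemma sumC_shift u : cvgC u -> sumC u = u 0%N + sumC (fun n => u n.+1).
Proof.
move=> [a b]; apply: cplxE; rewrite ?ReD ?ImD ?sumC_Re ?sumC_Im.
  by rewrite sumS_shift.
by rewrite sumS_shift.
Qed.

Lemma cvgC_single u m : (forall n, n != m -> u n = 0) -> cvgC u /\ sumC u = u m.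
Proof.
move=> h.
have [a a'] := @cvgS_single (fun n => complex.Re (u n)) m (fun n hn => f_equal _ (h n hn)).
have [b b'] := @cvgS_single (fun n => complex.Im (u n)) m (fun n hn => f_equal _ (h n hn)).
by split; [split | apply: cplxE; rewrite ?sumC_Re ?sumC_Im].
Qed.

Lemma cvgC_real f : cvgS f -> cvgC (fun n => (f n)%:C).
Proof. by move=> h; split => //=; apply: cvgS_zero. Qed.
Lemma sumC_real f : sumC (fun n => (f n)%:C) = (sumS f)%:C.
Proof. by apply: cplxE; rewrite ?sumC_Re ?sumC_Im //= sumS_zero. Qed.
Lemma cvgC_real_iff f : cvgC (fun n => (f n)%:C) <-> cvgS f.
Proof. by split => [[]|/cvgC_real]. Qed.

Lemma cvgC_zero : cvgC (fun _ => 0 : R[i]).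
Proof. by split; apply: cvgS_zero. Qed.
Lemma sumC_zero : sumC (fun _ => 0 : R[i]) = 0.
Proof. by apply: cplxE; rewrite ?sumC_Re ?sumC_Im /= sumS_zero. Qed.


End CS.

Local Notation C2R := (@C2 R).
Local Notation L2R := (@L2 R).
Local Notation HsR := (@Hs R).
Local Notation KsR := (@Ks R).
Implicit Types u v w : C2R.
Local Notation o0 := (@Ordinal 2 0 isT).
Local Notation o1 := (@Ordinal 2 1 isT).
Lemma ord2_cases (j : 'I_2) : j = o0 \/ j = o1.
Proof. by case: j => -[|[|//]] p; [left|right]; apply/val_inj. Qed.

Definition normC2 (u : C2R) : R :=
  complex.Re (u o0) ^+ 2 + complex.Im (u o0) ^+ 2 + (complex.Re (u o1) ^+ 2 + complex.Im (u o1) ^+ 2).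

Lemma ipC2E (u v : C2R) : ipC2 u v = u o0 * (v o0)^* + u o1 * (v o1)^*.
Proof.
rewrite /ipC2 big_ord_recl big_ord1; have -> : lift ord0 ord0 = o1 :> 'I_2 by apply: val_inj.
by have -> : ord0 = o0 :> 'I_2 by apply: val_inj.
Qed.

Lemma ipC2_self (u : C2R) : ipC2 u u = (normC2 u)%:C.
Proof.
rewrite ipC2E /normC2; case: (u o0) => a b; case: (u o1) => c d.
by apply: cplxE => /=; ring.
Qed.

Lemma normC2_ge0 (u : C2R) : 0 <= normC2 u.
Proof. rewrite /normC2; nra. Qed.

Lemma prod_bound (p q : R) : - (p ^+ 2 + q ^+ 2) <= p * q <= p ^+ 2 + q ^+ 2.
Proof.
have h1 := sqr_ge0 (p - q); have h2 := sqr_ge0 (p + q).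
apply/andP; split; nra.
Qed.

Lemma Re_ipC2_bound (u v : C2R) : `|complex.Re (ipC2 u v)| <= normC2 u + normC2 v.
Proof.
rewrite ipC2E /normC2; case: (u o0) => a b; case: (u o1) => c d.
case: (v o0) => a' b'; case: (v o1) => c' d' /=.
move: (prod_bound a a') (prod_bound b b') (prod_bound c c') (prod_bound d d').
move=> /andP[h1 h1'] /andP[h2 h2'] /andP[h3 h3'] /andP[h4 h4'].
rewrite ler_norml; apply/andP; split; lra.
Qed.

Lemma Im_ipC2_bound (u v : C2R) : `|complex.Im (ipC2 u v)| <= normC2 u + normC2 v.
Proof.
rewrite ipC2E /normC2; case: (u o0) => a b; case: (u o1) => c d.
case: (v o0) => a' b'; case: (v o1) => c' d' /=.
move: (prod_bound a b') (prod_bound b a') (prod_bound c d') (prod_bound d c').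
move=> /andP[h1 h1'] /andP[h2 h2'] /andP[h3 h3'] /andP[h4 h4'].
rewrite ler_norml; apply/andP; split; lra.
Qed.

Lemma ipC2_conj (u v : C2R) : ipC2 v u = (ipC2 u v)^*.
Proof.
rewrite !ipC2E; case: (u o0) => a b; case: (u o1) => c d.
case: (v o0) => a' b'; case: (v o1) => c' d'.
by apply: cplxE => /=; ring.
Qed.

Lemma ipC2_subl (u w v : C2R) : ipC2 (u - w) v = ipC2 u v - ipC2 w v.
Proof.
rewrite !ipC2E !subfE; case: (u o0) => a b; case: (u o1) => c d.
case: (v o0) => a' b'; case: (v o1) => c' d'; case: (w o0) => p q; case: (w o1) => r s.
by apply: cplxE => /=; ring.
Qed.
Lemma ipC2_subr (v u w : C2R) : ipC2 v (u - w) = ipC2 v u - ipC2 v w.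
Proof.
rewrite !ipC2E !subfE; case: (u o0) => a b; case: (u o1) => c d.
case: (v o0) => a' b'; case: (v o1) => c' d'; case: (w o0) => p q; case: (w o1) => r s.
by apply: cplxE => /=; ring.
Qed.
Lemma ipC2_0l (v : C2R) : ipC2 0 v = 0.
Proof. by rewrite ipC2E !zerofE !mul0r addr0. Qed.
Lemma ipC2_0r (v : C2R) : ipC2 v 0 = 0.
Proof. by rewrite ipC2E !zerofE; case: (v o0) => a b; case: (v o1) => c d; apply: cplxE => /=; ring. Qed.
Lemma normC2_sub (u w : C2R) : normC2 (u - w) <= 2 * normC2 u + 2 * normC2 w.
Proof.
rewrite /normC2 !subfE; case: (u o0) => a b; case: (u o1) => c d.
case: (w o0) => p q; case: (w o1) => r s /=.
have h1 := sqr_ge0 (a + p); have h2 := sqr_ge0 (b + q).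
have h3 := sqr_ge0 (c + r); have h4 := sqr_ge0 (d + s).
nra.
Qed.
Lemma normC2_eq0 (u : C2R) : normC2 u = 0 -> u = 0.
Proof.
rewrite /normC2 => h; apply/funext => j; rewrite zerofE.
have h0 := sqr_ge0 (complex.Re (u o0)); have h1 := sqr_ge0 (complex.Im (u o0)).
have h2 := sqr_ge0 (complex.Re (u o1)); have h3 := sqr_ge0 (complex.Im (u o1)).
have e : forall z : R, 0 <= z -> z ^+ 2 = 0 -> z = 0.
  by move=> z _ /eqP; rewrite sqrf_eq0 => /eqP.
have sq0 : forall z : R, z ^+ 2 = 0 -> z = 0 by move=> z /eqP; rewrite sqrf_eq0 => /eqP.
case: (ord2_cases j) => ->; apply: cplxE; rewrite ?Re0 ?Im0; apply: sq0; lra.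
Qed.
Lemma normC2_0 : normC2 (0 : C2R) = 0.
Proof. by rewrite /normC2 !zerofE /=; rewrite expr0n /=; lra. Qed.

Definition ej (j : 'I_2) : C2R := fun k => if k == j then 1 else 0.
Lemma ipC2_ejl (j : 'I_2) (u : C2R) : ipC2 (ej j) u = (u j)^*.
Proof.
rewrite ipC2E /ej; case: (ord2_cases j) => -> /=; rewrite ?mul1r ?mul0r ?add0r ?addr0 //.
Qed.

Section L2S.
Implicit Types (x y z : L2R).
Definition nL2 x := sumS (fun n => normC2 (x n)).

Lemma inL2E x : inL2 x <-> cvgS (fun n => normC2 (x n)).
Proof.
rewrite /inL2 (_ : (fun n => ipC2 (x n) (x n)) = fun n => (normC2 (x n))%:C).
  exact: cvgC_real_iff.
by apply/funext => n; rewrite ipC2_self.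
Qed.
Lemma ipL2_self x : ipL2 x x = (nL2 x)%:C.
Proof.
rewrite /ipL2 (_ : (fun n => ipC2 (x n) (x n)) = fun n => (normC2 (x n))%:C).
  exact: sumC_real.
by apply/funext => n; rewrite ipC2_self.
Qed.
Lemma ipL2_cvg {x y} : inL2 x -> inL2 y -> cvgC (fun n => ipC2 (x n) (y n)).
Proof.
move=> /inL2E hx /inL2E hy; have hs := cvgS_add hx hy; split.
  exact: (cvgS_dom (fun n => Re_ipC2_bound (x n) (y n)) hs).
exact: (cvgS_dom (fun n => Im_ipC2_bound (x n) (y n)) hs).
Qed.
Lemma nL2_ge0 x : inL2 x -> 0 <= nL2 x.
Proof. by move=> /inL2E h; apply: sumS_ge0 => // n; apply: normC2_ge0. Qed.
Lemma nL2_eq0 x : inL2 x -> nL2 x = 0 -> x = 0.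
Proof.
move=> /inL2E h e; apply/funext => n; rewrite zerofE; apply: normC2_eq0.
exact: (@sumS_eq0 (fun n => normC2 (x n)) (fun k => normC2_ge0 _) h e n).
Qed.
Lemma normC2_le_nL2 x m : inL2 x -> normC2 (x m) <= nL2 x.
Proof. by move=> /inL2E h; apply: (@term_le_sumS (fun n => normC2 (x n))) => // n; apply: normC2_ge0. Qed.

Lemma inL2_0 : inL2 (0 : L2R).
Proof. by apply/inL2E; apply: (@cvgS_ext (fun _ => 0)) => [n|]; rewrite ?zerofE ?normC2_0 //; apply: cvgS_zero. Qed.
Lemma inL2_sub x y : inL2 x -> inL2 y -> inL2 (x - y).
Proof.
move=> /inL2E hx /inL2E hy; apply/inL2E.
apply: (cvgS_le (fun n => 2 * normC2 (x n) + 2 * normC2 (y n))).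
- by move=> n; apply: normC2_ge0.
- by move=> n; rewrite subfE; apply: normC2_sub.
by apply: cvgS_add; apply: cvgS_scale.
Qed.

Lemma ipL2_subl x y z : inL2 x -> inL2 y -> inL2 z -> ipL2 (x - y) z = ipL2 x z - ipL2 y z.
Proof.
move=> hx hy hz; rewrite /ipL2 -sumC_sub; try exact: ipL2_cvg.
by apply: sumC_ext => n; rewrite subfE ipC2_subl.
Qed.
Lemma ipL2_subr x y z : inL2 x -> inL2 y -> inL2 z -> ipL2 z (x - y) = ipL2 z x - ipL2 z y.
Proof.
move=> hx hy hz; rewrite /ipL2 -sumC_sub; try exact: ipL2_cvg.
by apply: sumC_ext => n; rewrite subfE ipC2_subr.
Qed.
Lemma ipL2_conj x y : inL2 x -> inL2 y -> ipL2 y x = (ipL2 x y)^*.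
Proof.
move=> hx hy; rewrite /ipL2 -sumC_conj; last exact: ipL2_cvg.
by apply: sumC_ext => n; rewrite ipC2_conj.
Qed.
Lemma ipL2_0l y : ipL2 0 y = 0.
Proof. by rewrite /ipL2 (@sumC_ext _ (fun _ => 0)) ?sumC_zero // => n; rewrite zerofE ipC2_0l. Qed.
Lemma ipL2_0r y : ipL2 y 0 = 0.
Proof. by rewrite /ipL2 (@sumC_ext _ (fun _ => 0)) ?sumC_zero // => n; rewrite zerofE ipC2_0r. Qed.

Definition single (m : nat) (u : C2R) : L2R := fun n => if n == m then u else 0.
Lemma inL2_single m u : inL2 (single m u).
Proof.
apply/inL2E; apply: (proj1 (@cvgS_single (fun n => normC2 (single m u n)) m _)).
by move=> n /negPf hn; rewrite /single hn normC2_0.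
Qed.
Lemma ipL2_singlel m u y : ipL2 (single m u) y = ipC2 u (y m).
Proof.
have h : forall n, n != m -> ipC2 (single m u n) (y n) = 0.
  by move=> n /negPf hn; rewrite /single hn ipC2_0l.
by rewrite /ipL2; have [_ ->] := @cvgC_single (fun n => ipC2 (single m u n) (y n)) m h; rewrite /single eqxx.
Qed.
Lemma ipL2_singler m u y : ipL2 y (single m u) = ipC2 (y m) u.
Proof.
have h : forall n, n != m -> ipC2 (y n) (single m u n) = 0.
  by move=> n /negPf hn; rewrite /single hn ipC2_0r.
by rewrite /ipL2; have [_ ->] := @cvgC_single (fun n => ipC2 (y n) (single m u n)) m h; rewrite /single eqxx.
Qed.

Lemma nL2_shift x : inL2 x -> nL2 x = normC2 (x 0%N) + nL2 (fun n => x n.+1).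
Proof. by move=> /inL2E h; rewrite /nL2 sumS_shift. Qed.
Lemma inL2_shift x : inL2 x <-> inL2 (fun n => x n.+1).
Proof. rewrite !inL2E; exact: cvgS_shift. Qed.

End L2S.
Section HS.
Implicit Types (h k l : HsR).
Definition nH h := \sum_(i < 4) nL2 (h i).

Lemma ord4_cases (i : 'I_4) : [\/ i = cmp1, i = cmp2, i = cmp3 | i = cmp4].
Proof.
case: i => -[|[|[|[|//]]]] p; [apply: Or41|apply: Or42|apply: Or43|apply: Or44]; apply/val_inj => //.
Qed.

Lemma sum4 (F : 'I_4 -> R[i]) : \sum_(i < 4) F i = F cmp1 + F cmp2 + F cmp3 + F cmp4.
Proof.
rewrite (bigD1 cmp1) // (bigD1 cmp2) // (bigD1 cmp3) // (bigD1 cmp4) //= big1 ?addr0 ?addrA //.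
by move=> i; case: (ord4_cases i) => ->; rewrite eqxx /= ?andbF.
Qed.

Lemma ipH4 h k : ipH h k = ipL2 (h cmp1) (k cmp1) + ipL2 (h cmp2) (k cmp2)
   + ipL2 (h cmp3) (k cmp3) + ipL2 (h cmp4) (k cmp4).
Proof. exact: sum4. Qed.

Lemma ipH_self h : ipH h h = (nH h)%:C.
Proof. by rewrite /ipH /nH raddf_sum; apply: eq_bigr => i _; rewrite ipL2_self. Qed.

Lemma nH_ge0 h : inH h -> 0 <= nH h.
Proof. by move=> hh; apply: sumr_ge0 => i _; apply: nL2_ge0. Qed.

Lemma nL2_le_nH h i : inH h -> nL2 (h i) <= nH h.
Proof.
move=> hh; rewrite /nH (bigD1 i) //= lerDl; apply: sumr_ge0 => j _; exact: nL2_ge0.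
Qed.

Lemma nH_eq0 h : inH h -> nH h = 0 -> h = 0.
Proof.
move=> hh e; apply/funext => i; rewrite zerofE; apply: nL2_eq0 => //.
apply/le_anti; rewrite nL2_ge0 // andbT -e; exact: nL2_le_nH.
Qed.

Lemma inH_0 : inH (0 : HsR).
Proof. by move=> i; rewrite zerofE; apply: inL2_0. Qed.
Lemma inH_sub h k : inH h -> inH k -> inH (h - k).
Proof. by move=> a b i; rewrite subfE; apply: inL2_sub. Qed.

Lemma ipH_subl h k l : inH h -> inH k -> inH l -> ipH (h - k) l = ipH h l - ipH k l.
Proof.
move=> a b c; rewrite /ipH -sumrB; apply: eq_bigr => i _.
by rewrite subfE ipL2_subl.
Qed.
Lemma ipH_subr h k l : inH h -> inH k -> inH l -> ipH l (h - k) = ipH l h - ipH l k.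
Proof.
move=> a b c; rewrite /ipH -sumrB; apply: eq_bigr => i _.
by rewrite subfE ipL2_subr.
Qed.
Lemma ipH_conj h k : inH h -> inH k -> ipH k h = (ipH h k)^*.
Proof.
move=> a b; rewrite /ipH rmorph_sum; apply: eq_bigr => i _.
by rewrite ipL2_conj.
Qed.
Lemma ipH_0l h : ipH 0 h = 0.
Proof. by rewrite /ipH big1 // => i _; rewrite zerofE ipL2_0l. Qed.
Lemma ipH_0r h : ipH h 0 = 0.
Proof. by rewrite /ipH big1 // => i _; rewrite zerofE ipL2_0r. Qed.

Definition deltaH (i : 'I_4) (m : nat) (u : C2R) : HsR :=
  fun i' => if i' == i then single m u else 0.
Lemma inH_delta i m u : inH (deltaH i m u).
Proof. by move=> i'; rewrite /deltaH; case: ifP => _; [apply: inL2_single | apply: inL2_0]. Qed.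
Lemma ipH_deltal i m u h : ipH (deltaH i m u) h = ipC2 u (h i m).
Proof.
rewrite /ipH (bigD1 i) //= big1 => [|j /negPf hj]; last by rewrite /deltaH hj ipL2_0l.
by rewrite addr0 /deltaH eqxx ipL2_singlel.
Qed.

Lemma conjK (c : R[i]) : (c^*)^* = c.
Proof. by case: c => a b; apply: cplxE => /=; rewrite ?opprK. Qed.

Lemma entryH h i m j : h i m j = (ipH (deltaH i m (ej j)) h)^*.
Proof. by rewrite ipH_deltal ipC2_ejl conjK. Qed.

Lemma adj_entry {T Ts : HsR -> HsR} : is_adjoint inH ipH T Ts ->
  forall y : HsR, inH y -> forall i m j, Ts y i m j = (ipH (T (deltaH i m (ej j))) y)^*.
Proof.
move=> [hin hadj] y hy i m j; rewrite entryH -hadj //; exact: inH_delta.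
Qed.

Lemma entryL2 x m j : x m j = (ipL2 (single m (ej j)) x)^*.
Proof. by rewrite ipL2_singlel ipC2_ejl conjK. Qed.
Lemma adj_entryL2 {T Ts : L2R -> L2R} : is_adjoint inL2 ipL2 T Ts ->
  forall y, inL2 y -> forall m j, Ts y m j = (ipL2 (T (single m (ej j))) y)^*.
Proof.
move=> [hin hadj] y hy m j; rewrite entryL2 -hadj //; exact: inL2_single.
Qed.

Section Ops.
Variable alpha : R[i].
Definition H1s (v : C2R) : C2R :=
  fun j => if nat_of_ord j == 1%N then alpha^* * v o0 else 0.
Definition sq (z : R[i]) : R := complex.Re z ^+ 2 + complex.Im z ^+ 2.
Definition s2 : R := sq alpha.

Lemma fun2E (f g : C2R) : f o0 = g o0 -> f o1 = g o1 -> f = g.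
Proof. by move=> a b; apply/funext => j; case: (ord2_cases j) => ->. Qed.

Lemma H1_0 : H1 alpha 0 = 0.
Proof. by apply: fun2E; rewrite /H1 /= ?mulr0. Qed.
Lemma H1s_0 : H1s 0 = 0.
Proof. by apply: fun2E; rewrite /H1s /= ?mulr0. Qed.

Lemma ipC2_addl (u u' v : C2R) : ipC2 (u + u') v = ipC2 u v + ipC2 u' v.
Proof.
rewrite !ipC2E !addfE; case: (u o0) => a b; case: (u o1) => c d.
case: (v o0) => a' b'; case: (v o1) => c' d'; case: (u' o0) => p q; case: (u' o1) => r s.
by apply: cplxE => /=; ring.
Qed.
Lemma ipC2_addr (u v v' : C2R) : ipC2 u (v + v') = ipC2 u v + ipC2 u v'.
Proof.
rewrite !ipC2E !addfE; case: (u o0) => a b; case: (u o1) => c d.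
case: (v o0) => a' b'; case: (v o1) => c' d'; case: (v' o0) => p q; case: (v' o1) => r s.
by apply: cplxE => /=; ring.
Qed.

Lemma ipC2_H1l (u v : C2R) : ipC2 (H1 alpha u) v = ipC2 u (H1s v).
Proof.
rewrite !ipC2E /H1 /H1s /=; case: (u o0) => a b; case: (u o1) => c d.
case: (v o0) => a' b'; case: (v o1) => c' d'; case: alpha => p q.
by apply: cplxE => /=; ring.
Qed.
Lemma ipC2_H1sl (u v : C2R) : ipC2 (H1s u) v = ipC2 u (H1 alpha v).
Proof.
rewrite !ipC2E /H1 /H1s /=; case: (u o0) => a b; case: (u o1) => c d.
case: (v o0) => a' b'; case: (v o1) => c' d'; case: alpha => p q.
by apply: cplxE => /=; ring.
Qed.

Lemma normC2_ab (u v : C2R) : normC2 (H1 alpha u + H1s v) = s2 * (sq (u o1) + sq (v o0)).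
Proof.
rewrite /normC2 /s2 /sq !addfE /H1 /H1s /=; case: (u o0) => a b; case: (u o1) => c d.
case: (v o0) => a' b'; case: (v o1) => c' d'; case: alpha => p q /=.
ring.
Qed.
Lemma normC2_b (v : C2R) : normC2 (H1s v) = s2 * sq (v o0).
Proof.
rewrite /normC2 /s2 /sq /H1s /=; case: (v o0) => a' b'; case: alpha => p q /=.
ring.
Qed.
Lemma normC2_a (v : C2R) : normC2 (H1 alpha v) = s2 * sq (v o1).
Proof.
rewrite /normC2 /s2 /sq /H1 /=; case: (v o1) => a' b'; case: alpha => p q /=.
ring.
Qed.
Lemma normC2_sq (v : C2R) : normC2 v = sq (v o0) + sq (v o1).
Proof. by []. Qed.
Lemma sq_ge0 (z : R[i]) : 0 <= sq z.
Proof. rewrite /sq; nra. Qed.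
Lemma s2_ge0 : 0 <= s2.
Proof. exact: sq_ge0. Qed.
Lemma s2_le1 : `|alpha| <= 1 -> s2 <= 1.
Proof.
rewrite normc_def (_ : 1 = (1:R)%:C) // lecR => h.
have h0 : 0 <= sq alpha := sq_ge0 alpha.
rewrite /s2 -(sqr_sqrtr h0); have := sqrtr_ge0 (sq alpha); rewrite /sq in h *; nra.
Qed.
End Ops.

Section Ops2.
Variable alpha : R[i].
Definition shiftL (c : L2R) : L2R := fun n => c n.+1.
Definition NsE (c : L2R) : L2R := single 0 (H1s alpha (c 0%N)).
Definition E3 (w : C2R) : HsR := fun i => if nat_of_ord i == 2%N then single 0 w else 0.
Definition PsE (y : HsR) : HsR := fun i => match nat_of_ord i with
  | 0 => y cmp4 | 1 => shiftL (y cmp3) | _ => 0 end.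
Definition QE (y : HsR) : HsR := fun i => match nat_of_ord i with
  | 0 => y cmp1 | 1 => y cmp2 | 2 => single 0 (y cmp3 0%N) | _ => 0 end.

Lemma Tz_single m u : Tz (single m u) = single m.+1 u.
Proof. by apply/funext => -[|n]. Qed.
Lemma Tz_0 : Tz (0 : L2R) = 0.
Proof. by apply/funext => -[|n]. Qed.

Lemma Tzs_expl {Tzs} : is_adjoint inL2 ipL2 Tz Tzs -> forall y, inL2 y -> Tzs y = shiftL y.
Proof.
move=> h y hy; apply/funext => m; apply/funext => j.
by rewrite (adj_entryL2 h) // Tz_single ipL2_singlel ipC2_ejl conjK.
Qed.

Lemma single0_0 u : single 0 u 0%N = u.
Proof. by rewrite /single eqxx. Qed.
Lemma singleS m u : single m.+1 u 0%N = 0.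
Proof. by []. Qed.
Lemma single_0 m : single m (0 : C2R) = 0.
Proof. by apply/funext => n; rewrite /single; case: ifP. Qed.

Lemma Ns_expl {Ns} : is_adjoint inL2 ipL2 (Nalpha alpha) Ns -> forall y, inL2 y -> Ns y = NsE y.
Proof.
move=> h y hy; apply/funext => m; apply/funext => j.
rewrite (adj_entryL2 h) //.
have -> : Nalpha alpha (single m (ej j)) = single 0 (H1 alpha (single m (ej j) 0%N)) by [].
rewrite ipL2_singlel ipC2_H1l; case: m => [|m].
  by rewrite single0_0 ipC2_ejl conjK /NsE single0_0.
by rewrite singleS ipC2_0l /NsE /single /= zerofE; apply: cplxE => /=; rewrite ?oppr0.
Qed.
Lemma conj0 : (0 : R[i])^* = 0.
Proof. by apply: cplxE => /=; rewrite ?oppr0. Qed.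

Lemma ipH_E3l w h : ipH (E3 w) h = ipC2 w (h cmp3 0%N).
Proof. by rewrite ipH4 /E3 /= !ipL2_0l ipL2_singlel !add0r addr0. Qed.
Lemma ipH_E3r h w : ipH h (E3 w) = ipC2 (h cmp3 0%N) w.
Proof. by rewrite ipH4 /E3 /= !ipL2_0r ipL2_singler !add0r addr0. Qed.
Lemma inH_E3 w : inH (E3 w).
Proof. by move=> i; rewrite /E3; case: ifP => _; [apply: inL2_single | apply: inL2_0]. Qed.
Lemma E3_cmp3 w : E3 w cmp3 0%N = w.
Proof. by []. Qed.
Lemma E3_0 : E3 0 = 0.
Proof. by apply/funext => i; rewrite /E3 single_0; case: ifP. Qed.
Lemma E3_add w w' : E3 (w + w') = E3 w + E3 w'.
Proof.
apply/funext => i; apply/funext => n; rewrite (@addfE _ _ (E3 w) (E3 w') i) /E3.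
case: ifP => _; last by rewrite addr0.
by rewrite (@addfE _ _ (single 0 w) (single 0 w')) /single; case: ifP; rewrite ?addr0.
Qed.
Lemma nH_E3 w : nH (E3 w) = normC2 w.
Proof.
have e : (ipH (E3 w) (E3 w)) = (normC2 w)%:C by rewrite ipH_E3l E3_cmp3 ipC2_self.
by move: e; rewrite ipH_self => -[].
Qed.

Lemma As_expl {As} : is_adjoint inH ipH (Aalpha alpha) As ->
  forall y : HsR, inH y -> As y = E3 (H1s alpha (y cmp3 0%N)).
Proof.
move=> h y hy; apply/funext => i; apply/funext => m; apply/funext => j.
rewrite (adj_entry h) //.
have -> : Aalpha alpha (deltaH i m (ej j)) = E3 (H1 alpha (deltaH i m (ej j) cmp3 0%N)) by [].
rewrite ipH_E3l ipC2_H1l /deltaH /E3.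
case: (ord4_cases i) => ->; rewrite /= ?ipC2_0l ?conj0 ?zerofE //.
case: m => [|m]; first by rewrite /single /= ipC2_ejl conjK.
by rewrite /single /= ipC2_0l conj0.
Qed.

Lemma deltaH_eq i m u : deltaH i m u i = single m u.
Proof. by rewrite /deltaH eqxx. Qed.
Lemma deltaH_ne i i' m u : i' != i -> deltaH i m u i' = 0.
Proof. by rewrite /deltaH => /negPf ->. Qed.

Lemma ipH_Pop h k : ipH (Pop h) k = ipL2 (Tz (h cmp2)) (k cmp3) + ipL2 (h cmp1) (k cmp4).
Proof.
rewrite ipH4 (_ : Pop h cmp1 = 0) // (_ : Pop h cmp2 = 0) // !ipL2_0l !add0r.
by [].
Qed.

Lemma Ps_expl {Ps} : is_adjoint inH ipH Pop Ps -> forall y : HsR, inH y -> Ps y = PsE y.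
Proof.
move=> h y hy; apply/funext => i; apply/funext => m; apply/funext => j.
rewrite (adj_entry h) // ipH_Pop.
case: (ord4_cases i) => ->; rewrite ?deltaH_eq ?deltaH_ne // ?Tz_0 ?Tz_single ?ipL2_0l ?ipL2_singlel ?ipC2_ejl ?add0r ?addr0 ?conjK ?conj0 //.
Qed.
Lemma sum4R (F : 'I_4 -> R) : \sum_(i < 4) F i = F cmp1 + F cmp2 + F cmp3 + F cmp4.
Proof.
rewrite (bigD1 cmp1) // (bigD1 cmp2) // (bigD1 cmp3) // (bigD1 cmp4) //= big1 ?addr0 ?addrA //.
by move=> i; case: (ord4_cases i) => ->; rewrite eqxx /= ?andbF.
Qed.
Lemma nH4 h : nH h = nL2 (h cmp1) + nL2 (h cmp2) + nL2 (h cmp3) + nL2 (h cmp4).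
Proof. exact: sum4R. Qed.

Lemma nL2_single m u : nL2 (single m u) = normC2 u.
Proof.
have e : ipL2 (single m u) (single m u) = (normC2 u)%:C by rewrite ipL2_singlel /single eqxx ipC2_self.
by move: e; rewrite ipL2_self => -[].
Qed.
Lemma nL2_0 : nL2 (0 : L2R) = 0.
Proof. by rewrite -(single_0 0) nL2_single normC2_0. Qed.

Lemma Qproj_expl {Tzs} : is_adjoint inL2 ipL2 Tz Tzs -> forall y : HsR, inH y -> Qproj Tzs y = QE y.
Proof.
move=> hT y hy; apply/funext => i; case: (ord4_cases i) => -> //.
rewrite (_ : Qproj Tzs y cmp3 = y cmp3 - Tz (Tzs (y cmp3))) // (Tzs_expl hT) //.
apply/funext => -[|n]; rewrite subfE.
  by rewrite (_ : Tz _ 0%N = 0) // subr0.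
by rewrite (_ : Tz (shiftL (y cmp3)) n.+1 = y cmp3 n.+1) // subrr.
Qed.

Lemma inH_QE y : inH y -> inH (QE y).
Proof.
move=> hy i; case: (ord4_cases i) => ->; [exact: hy|exact: hy|exact: inL2_single|exact: inL2_0].
Qed.
Lemma QE_sub a b : QE (a - b) = QE a - QE b.
Proof.
apply/funext => i; rewrite (@subfE _ _ (QE a) (QE b) i).
case: (ord4_cases i) => -> //; last by rewrite subr0.
apply/funext => -[|n]; rewrite (@subfE _ _ (single 0 _) (single 0 _)) //.
by rewrite subr0.
Qed.
Lemma QE_idem y : QE (QE y) = QE y.
Proof. by apply/funext => i; case: (ord4_cases i) => ->. Qed.
Lemma ipH_QE a b : ipH (QE a) b = ipH a (QE b).
Proof.
rewrite !ipH4 (_ : QE a cmp4 = 0) // (_ : QE b cmp4 = 0) // ipL2_0l ipL2_0r.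
rewrite (_ : QE a cmp3 = single 0 (a cmp3 0%N)) // (_ : QE b cmp3 = single 0 (b cmp3 0%N)) //.
by rewrite ipL2_singlel ipL2_singler.
Qed.
Lemma QE_E3 w : QE (E3 w) = E3 w.
Proof. by apply/funext => i; case: (ord4_cases i) => ->. Qed.
Lemma QE_0 : QE 0 = 0.
Proof. by apply/funext => i; case: (ord4_cases i) => ->; rewrite // (_ : QE 0 cmp3 = single 0 0) // single_0. Qed.
Lemma QE_cmp3 y : QE y cmp3 0%N = y cmp3 0%N.
Proof. by []. Qed.
Lemma nH_QE y : nH (QE y) = nL2 (y cmp1) + nL2 (y cmp2) + normC2 (y cmp3 0%N).
Proof. by rewrite nH4 (_ : QE y cmp4 = 0) // nL2_0 addr0 (_ : QE y cmp3 = single 0 (y cmp3 0%N)) // nL2_single. Qed.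

Lemma nH_PsE y : nH (PsE y) = nL2 (y cmp4) + nL2 (shiftL (y cmp3)).
Proof. by rewrite nH4 (_ : PsE y cmp3 = 0) // (_ : PsE y cmp4 = 0) // nL2_0 !addr0. Qed.
Lemma shiftL_single0 u : shiftL (single 0 u) = 0.
Proof. by apply/funext. Qed.
Lemma PsE_E3 w : PsE (E3 w) = 0.
Proof. by apply/funext => i; case: (ord4_cases i) => -> //. Qed.
Lemma PsE_0 : PsE 0 = 0.
Proof. by apply/funext => i; case: (ord4_cases i) => -> //. Qed.
Lemma inH_PsE y : inH y -> inH (PsE y).
Proof.
move=> hy i; case: (ord4_cases i) => ->; [exact: hy| |exact: inL2_0|exact: inL2_0].
exact: (proj1 (inL2_shift _) (hy cmp3)).
Qed.
Lemma sub_Pop_PsE y : y - Pop (PsE y) = QE y.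
Proof.
apply/funext => i; rewrite (@subfE _ _ y (Pop (PsE y)) i).
case: (ord4_cases i) => ->; rewrite ?subr0 ?subrr //.
apply/funext => -[|n]; rewrite (@subfE _ _ (y cmp3) _) /= ?subr0 //.
by rewrite /shiftL subrr.
Qed.

Section DP.
Variable Tzs : L2R -> L2R.
Hypothesis hT : is_adjoint inL2 ipL2 Tz Tzs.

Lemma inDP_E3 w : inDP Tzs (E3 w).
Proof.
split; first exact: inH_E3.
split => //; rewrite (_ : E3 w cmp3 = single 0 w) // (Tzs_expl hT) //.
exact: inL2_single.
Qed.
Lemma inDP_QE y : inH y -> inDP Tzs (QE y).
Proof.
move=> hy; split; first exact: inH_QE.
split => //; rewrite (_ : QE y cmp3 = single 0 (y cmp3 0%N)) // (Tzs_expl hT) //.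
exact: inL2_single.
Qed.
Lemma inDP_0 : inDP Tzs 0.
Proof. by rewrite -E3_0; exact: inDP_E3. Qed.
Lemma QE_DP y : inDP Tzs y -> QE y = y.
Proof.
move=> [hy [h3 h4]]; move: h3; rewrite (Tzs_expl hT) // => h3.
apply/funext => i; case: (ord4_cases i) => -> //.
apply/funext => -[|n] //=.
have e : y cmp3 n.+1 = 0 by have := congr1 (fun f : L2R => f n) h3; rewrite /shiftL zerofE.
by rewrite e.
Qed.
Lemma inDP_inH y : inDP Tzs y -> inH y.
Proof. by case. Qed.
End DP.

Lemma G1op_expl {Ns} : is_adjoint inL2 ipL2 (Nalpha alpha) Ns ->
  forall x : HsR, inL2 (x cmp3) -> G1op Ns x = E3 (H1s alpha (x cmp3 0%N)).
Proof. by move=> hN x hx; rewrite /G1op (Ns_expl hN). Qed.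

Lemma G1s_expl {Tzs Ns G1s} : is_adjoint inL2 ipL2 Tz Tzs -> is_adjoint inL2 ipL2 (Nalpha alpha) Ns ->
  is_adjoint (inDP Tzs) ipH (G1op Ns) G1s ->
  forall y : HsR, inDP Tzs y -> G1s y = E3 (H1 alpha (y cmp3 0%N)).
Proof.
move=> hT hN [hin hadj] y hy.
have hGy := hin y hy.
have key : forall i m j, inDP Tzs (deltaH i m (ej j)) ->
    G1s y i m j = E3 (H1 alpha (y cmp3 0%N)) i m j.
  move=> i m j hd; rewrite entryH -hadj // (G1op_expl hN); last exact: (proj1 hd cmp3).
  rewrite ipH_E3l ipC2_H1sl.
  case: (ord4_cases i) => ->; rewrite ?deltaH_eq ?deltaH_ne // ?ipC2_0l ?conj0 //.
  case: m {hd} => [|m]; first by rewrite single0_0 ipC2_ejl conjK.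
  by rewrite singleS ipC2_0l conj0.
have hd_in : forall i m j, inH (deltaH i m (ej j)) by move=> *; apply: inH_delta.
have Tzs0 : Tzs 0 = 0 by rewrite (Tzs_expl hT); [apply/funext => n; rewrite /shiftL | exact: inL2_0].
apply/funext => i; apply/funext => m; apply/funext => j.
case: (ord4_cases i) => ->.
- apply: key; split; first exact: hd_in.
  by rewrite !deltaH_ne // Tzs0.
- apply: key; split; first exact: hd_in.
  by rewrite !deltaH_ne // Tzs0.
- case: m => [|m].
    apply: key; split; first exact: hd_in.
    rewrite deltaH_eq (Tzs_expl hT) ?shiftL_single0; last exact: inL2_single.
    by split => //; rewrite deltaH_ne.
  have [_ [h3 _]] := hGy; move: h3; rewrite (Tzs_expl hT); last exact: (proj1 hGy cmp3).
  move=> h3; have e : G1s y cmp3 m.+1 = 0 by have := congr1 (fun f : L2R => f m) h3; rewrite /shiftL zerofE.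
  by rewrite e.
- by have [_ [_ h4]] := hGy; rewrite h4.
Qed.
Lemma nonneg_opp_C (r : R) : 0 <= r -> 0 <= - (r%:C) -> r = 0.
Proof.
move=> h0 h1; apply/le_anti; rewrite h0 andbT.
by move: h1; rewrite oppr_ge0 (_ : 0 = (0:R)%:C) // lecR.
Qed.

Lemma Dp_expl {Tzs : L2R -> L2R} {Ps Dp : HsR -> HsR} : is_adjoint inL2 ipL2 Tz Tzs -> is_adjoint inH ipH Pop Ps ->
  positive_op inH ipH Dp -> (forall x, inH x -> Dp (Dp x) = x - Pop (Ps x)) ->
  forall x : HsR, inH x -> Dp x = QE x.
Proof.
move=> hT hPs [[Din Dadj] Dpos] hDp2.
have D2 : forall x, inH x -> Dp (Dp x) = QE x.
  by move=> x hx; rewrite hDp2 // (Ps_expl hPs) // sub_Pop_PsE.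
have hadjD : is_adjoint inH ipH Dp Dp by [].
have Dlin : forall a b, inH a -> inH b -> Dp (a - b) = Dp a - Dp b.
  move=> a b ha hb; apply/funext=> i; apply/funext => m; apply/funext => j.
  have hab : inH (a - b) by apply: inH_sub.
  rewrite !subfE (adj_entry hadjD (a - b) hab) (adj_entry hadjD a ha) (adj_entry hadjD b hb).
  by rewrite ipH_subr ?rmorphB //; apply: Din; apply: inH_delta.
move=> x hx.
set z := Dp x.
have hz : inH z by apply: Din.
have hQx : inH (QE x) by apply: inH_QE.
have hQz : inH (QE z) by apply: inH_QE.
set y := z - QE x.
have hy : inH y by apply: inH_sub.
have DQx : Dp (QE x) = QE z by rewrite -D2 // D2 //; apply: Din.
have Dy : Dp y = QE x - QE z by rewrite Dlin // DQx /z D2.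
have QEy : QE y = - Dp y by rewrite Dy opprB /y QE_sub QE_idem.
set w := Dp y.
have hw : inH w by apply: Din.
have Dw : Dp w = 0 - w by rewrite D2 // QEy sub0r.
have pos := Dpos w hw.
rewrite Dw ipH_subl in pos; [|exact: inH_0|exact: hw|exact: hw].
rewrite ipH_0l sub0r ipH_self in pos.
have w0 : w = 0.
  apply: nH_eq0 => //; apply: nonneg_opp_C => //; exact: nH_ge0.
have QEy0 : QE y = 0 by rewrite QEy -/w w0 oppr0.
have yy : ipH y y = 0.
  rewrite {1}/y ipH_subl // Dadj // ipH_QE -/w w0 QEy0 ipH_0r subrr.
  done.
have y0 : y = 0.
  apply: nH_eq0 => //; move: yy; rewrite ipH_self => -[].
  done.
by apply/eqP; rewrite -subr_eq0 -/y y0.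
Qed.
End Ops2.

End HS.
Section WE.
Variable alpha : R[i].
Local Notation a := (H1 alpha).
Local Notation b := (H1s alpha).
Definition vK (k : KsR) (n : nat) : C2R := k n cmp3 0%N.
Definition W1E (k : KsR) : KsR := fun n =>
  if n is n'.+1 then E3 (a (vK k n') + b (vK k n)) else E3 (b (vK k 0%N)).
Definition W2E (k : KsR) : KsR := fun n => match n with
  | 0 => 0 | 1 => E3 (b (vK k 0%N))
  | n'.+2 => E3 (a (vK k n') + b (vK k n'.+1)) end.
Definition W3E (k : KsR) : KsR := fun n => match n with
  | 0 => PsE (k 0%N) | 1 => 0 | 2 => QE (k 0%N) | n'.+3 => k n'.+1 end.

Lemma W2E_S k n : W2E k n.+1 = W1E k n.
Proof. by case: n. Qed.

Lemma W12_comm k : W1E (W2E k) = W2E (W1E k).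
Proof.
apply/funext => -[|[|[|n]]].
- by rewrite /W1E /W2E /vK (_ : (0 : HsR) cmp3 0%N = 0) // H1s_0 E3_0.
- by rewrite /W1E /W2E /vK (_ : (0 : HsR) cmp3 0%N = 0) // H1_0 add0r.
- by [].
- by [].
Qed.

Lemma W13_comm k : W1E (W3E k) = W3E (W1E k).
Proof.
apply/funext => -[|[|[|n]]].
- by rewrite /W1E /W3E /vK (_ : PsE (k 0%N) cmp3 0%N = 0) // H1s_0 E3_0 PsE_E3.
- by rewrite /W1E /W3E /vK (_ : PsE (k 0%N) cmp3 0%N = 0) // (_ : (0 : HsR) cmp3 0%N = 0) // H1s_0 H1_0 addr0 E3_0.
- by rewrite /W1E /W3E /vK (_ : (0 : HsR) cmp3 0%N = 0) // H1_0 add0r QE_E3.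
- by case: n.
Qed.

Lemma W23_comm k : W2E (W3E k) = W3E (W2E k).
Proof.
apply/funext => -[|[|[|[|n]]]].
- by rewrite /W2E /W3E PsE_0.
- by rewrite /W2E /W3E /vK (_ : PsE (k 0%N) cmp3 0%N = 0) // H1s_0 E3_0.
- by rewrite /W2E /W3E /vK (_ : PsE (k 0%N) cmp3 0%N = 0) // (_ : (0 : HsR) cmp3 0%N = 0) // H1s_0 H1_0 addr0 E3_0 QE_0.
- by rewrite /W2E /W3E /vK (_ : (0 : HsR) cmp3 0%N = 0) // H1_0 add0r.
- by case: n.
Qed.
Lemma series0 (f : nat -> R) : series f 0 = 0.
Proof. by rewrite /series /= big_geq. Qed.

Lemma nH_0 : nH (0 : HsR) = 0.
Proof. by rewrite -E3_0 nH_E3 normC2_0. Qed.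

Lemma inH_W1E k n : inH (W1E k n).
Proof. by case: n => [|n]; apply: inH_E3. Qed.
Lemma inH_W2E k n : inH (W2E k n).
Proof. by case: n => [|n]; [apply: inH_0 | rewrite W2E_S; apply: inH_W1E]. Qed.

Lemma normv_le k n : inH (k n) -> normC2 (vK k n) <= nH (k n).
Proof. move=> h; exact: le_trans (normC2_le_nL2 _ _ (h cmp3)) (nL2_le_nH _ _ h). Qed.

Lemma nH_W1E0 k : nH (W1E k 0) = s2 alpha * sq (vK k 0%N o0).
Proof. by rewrite /W1E nH_E3 normC2_b. Qed.
Lemma nH_W1ES k n : nH (W1E k n.+1) = s2 alpha * (sq (vK k n o1) + sq (vK k n.+1 o0)).
Proof. by rewrite /W1E nH_E3 normC2_ab. Qed.

Lemma series_W1E k N : series (fun n => nH (W1E k n)) N.+1 + s2 alpha * sq (vK k N o1)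
   = s2 alpha * series (fun n => normC2 (vK k n)) N.+1.
Proof.
elim: N => [|N IH].
  by rewrite !seriesSr !series0 !add0r nH_W1E0 normC2_sq; ring.
rewrite seriesSr [in RHS]seriesSr [in RHS]mulrDr -IH nH_W1ES normC2_sq; ring.
Qed.

Lemma series_W1E_le k N : (forall n, inH (k n)) -> `|alpha| <= 1 ->
  series (fun n => nH (W1E k n)) N <= series (fun n => nH (k n)) N.
Proof.
move=> hk ha; case: N => [|N]; first by rewrite !series0.
have e := series_W1E k N.
have h1 := @s2_le1 alpha ha; have h0 := s2_ge0 alpha.
have hq := sq_ge0 (vK k N o1).
have hP : 0 <= series (fun n => normC2 (vK k n)) N.+1.
  by rewrite /series /=; apply: sumr_ge0 => i _; apply: normC2_ge0.
have hPk : series (fun n => normC2 (vK k n)) N.+1 <= series (fun n => nH (k n)) N.+1.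
  by rewrite /series /=; apply: ler_sum => i _; apply: normv_le.
have : s2 alpha * series (fun n => normC2 (vK k n)) N.+1 <= series (fun n => normC2 (vK k n)) N.+1.
  by rewrite ler_piMl.
have : 0 <= s2 alpha * sq (vK k N o1) by apply: mulr_ge0.
lra.
Qed.

Lemma series_W2E k N : series (fun n => nH (W2E k n)) N.+1 = series (fun n => nH (W1E k n)) N.
Proof.
rewrite seriesS_shift (_ : W2E k 0 = 0) // nH_0 add0r.
by congr (series _ N); apply/funext => n; rewrite W2E_S.
Qed.

Lemma series_W2E_le k N : (forall n, inH (k n)) -> `|alpha| <= 1 ->
  series (fun n => nH (W2E k n)) N <= series (fun n => nH (k n)) N.
Proof.
move=> hk ha; case: N => [|N]; first by rewrite !series0.
rewrite series_W2E; apply: le_trans (series_W1E_le k N hk ha) _.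
by rewrite seriesSr lerDl; apply: nH_ge0.
Qed.

Lemma nH_Ps_Q y : inH y -> nH (PsE y) + nH (QE y) = nH y.
Proof.
move=> hy; rewrite nH_PsE nH_QE nH4 (nL2_shift _ (hy cmp3)).
rewrite (_ : shiftL (y cmp3) = fun n => y cmp3 n.+1) //; ring.
Qed.
Lemma normC2_a_le v : `|alpha| <= 1 -> normC2 (a v) <= normC2 v.
Proof.
move=> ha; rewrite normC2_a normC2_sq.
have h1 := @s2_le1 alpha ha; have h0 := s2_ge0 alpha.
have := sq_ge0 (v o0); have := sq_ge0 (v o1); nra.
Qed.
Lemma normC2_b_le v : `|alpha| <= 1 -> normC2 (b v) <= normC2 v.
Proof.
move=> ha; rewrite normC2_b normC2_sq.
have h1 := @s2_le1 alpha ha; have h0 := s2_ge0 alpha.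
have := sq_ge0 (v o0); have := sq_ge0 (v o1); nra.
Qed.

Lemma inL2_vK {k} : (forall n, inH (k n)) -> cvgS (fun n => nH (k n)) -> inL2 (vK k).
Proof.
move=> hk hc; apply/inL2E; apply: (cvgS_le (fun n => nH (k n))) => // n.
  exact: normC2_ge0.
exact: normv_le.
Qed.

Lemma ipK_W1_W3W2 (x y : KsR) : (forall n, inH (x n)) -> (forall n, inH (y n)) ->
  cvgS (fun n => nH (x n)) -> cvgS (fun n => nH (y n)) -> `|alpha| <= 1 ->
  ipK (W1E x) y = ipK (W3E x) (W2E y).
Proof.
move=> hx hy cx cy ha.
have vx := inL2_vK hx cx.
have vy := inL2_vK hy cy.
have cyS : cvgS (fun n => nH (y n.+1)) := proj1 (cvgS_shift _) cy.
have vyS : inL2 (fun n => vK y n.+1).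
  by apply/inL2E; apply: (cvgS_le (fun n => nH (y n.+1))) => // n; [exact: normC2_ge0 | exact: normv_le].
have ay : inL2 (fun n => a (vK y n)).
  move: vy => /inL2E vy; apply/inL2E; apply: (cvgS_le (fun n => normC2 (vK y n))) => // n.
    exact: normC2_ge0.
  exact: normC2_a_le.
have by1 : inL2 (fun n => b (vK y n.+1)).
  move: vyS => /inL2E vyS; apply/inL2E; apply: (cvgS_le (fun n => normC2 (vK y n.+1))) => // n.
    exact: normC2_ge0.
  exact: normC2_b_le.
set p := fun n => ipC2 (vK x n) (a (vK y n)).
set q := fun n => ipC2 (vK x n) (b (vK y n.+1)).
have cp : cvgC p := ipL2_cvg vx ay.
have cq : cvgC q := ipL2_cvg vx by1.
have cpS : cvgC (fun n => p n.+1) := (proj1 (cvgC_shift p) cp).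
have eL : forall n, ipH (W1E x n.+1) (y n.+1) = q n + p n.+1.
  move=> n; rewrite /W1E ipH_E3l ipC2_addl ipC2_H1l ipC2_H1sl addrC.
  by [].
have cL' : cvgC (fun n => ipH (W1E x n.+1) (y n.+1)).
  by apply: (@cvgC_ext (fun n => q n + p n.+1)) => [n|]; [rewrite eL | apply: cvgC_add].
have cL := proj2 (cvgC_shift (fun n => ipH (W1E x n) (y n))) cL'.
have eL0 : ipH (W1E x 0) (y 0%N) = p 0%N by rewrite /W1E ipH_E3l ipC2_H1sl.
have -> : ipK (W1E x) y = sumC p + sumC q.
  rewrite /ipK (sumC_shift _ cL) eL0 (@sumC_ext _ (fun n => q n + p n.+1)); last by move=> n; rewrite eL.
  by rewrite sumC_add // (sumC_shift _ cp); ring.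
have eR : forall n, ipH (W3E x n.+2) (W2E y n.+2) = p n + q n.
  move=> n; rewrite /W2E ipH_E3r (_ : W3E x n.+2 cmp3 0%N = vK x n); last by case: n.
  by rewrite ipC2_addr.
have cR2 : cvgC (fun n => ipH (W3E x n.+2) (W2E y n.+2)).
  by apply: (@cvgC_ext (fun n => p n + q n)) => [n|]; [rewrite eR | apply: cvgC_add].
have cR1 := proj2 (cvgC_shift (fun n => ipH (W3E x n.+1) (W2E y n.+1))) cR2.
have cR := proj2 (cvgC_shift (fun n => ipH (W3E x n) (W2E y n))) cR1.
rewrite /ipK. rewrite (sumC_shift _ cR). rewrite (sumC_shift _ cR1).
rewrite (_ : W2E y 0 = 0) // ipH_0r (_ : W3E x 1 = 0) // ipH_0l !add0r.
rewrite (@sumC_ext (fun n => ipH (W3E x n.+2) (W2E y n.+2)) (fun n => p n + q n)); last by move=> n; rewrite eR.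
by rewrite sumC_add.
Qed.
End WE.

Section Final.
Variables (alpha : R[i]) (halpha : `|alpha| <= 1) (Tzs Ns : L2R -> L2R) (As Ps Dp G1s : HsR -> HsR).
Hypotheses (hTzs : is_adjoint inL2 ipL2 Tz Tzs)
  (hNs : is_adjoint inL2 ipL2 (Nalpha alpha) Ns)
  (hAs : is_adjoint inH ipH (Aalpha alpha) As)
  (hPs : is_adjoint inH ipH Pop Ps)
  (hDp : positive_op inH ipH Dp)
  (hDp2 : forall x, inH x -> Dp (Dp x) = x - Pop (Ps x))
  (hG1s : is_adjoint (inDP Tzs) ipH (G1op Ns) G1s).

Lemma DpQ (x : HsR) : inH x -> Dp x = QE x.
Proof. exact: (Dp_expl hTzs hPs hDp hDp2). Qed.

Lemma cvgC_nH (k : KsR) : cvgC (fun n => ipH (k n) (k n)) <-> cvgS (fun n => nH (k n)).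
Proof.
rewrite (_ : (fun n => ipH (k n) (k n)) = fun n => (nH (k n))%:C); first exact: cvgC_real_iff.
by apply/funext => n; rewrite ipH_self.
Qed.
Lemma ipK_self (k : KsR) : ipK k k = (sumS (fun n => nH (k n)))%:C.
Proof.
rewrite /ipK (_ : (fun n => ipH (k n) (k n)) = fun n => (nH (k n))%:C); first exact: sumC_real.
by apply/funext => n; rewrite ipH_self.
Qed.

Lemma inK_inH {k : KsR} : inK Tzs k -> forall n, inH (k n).
Proof. by move=> [h0 [hD _]] [|n] //; exact: (proj1 (hD n)). Qed.
Lemma inK_cvg {k : KsR} : inK Tzs k -> cvgS (fun n => nH (k n)).
Proof. by move=> [_ [_ c]]; apply/cvgC_nH. Qed.

Lemma W1_expl {k : KsR} : inK Tzs k -> W1op As (G1op Ns) G1s Dp k = W1E alpha k.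
Proof.
move=> hk; have hH := inK_inH hk; have [h0 [hD _]] := hk.
apply/funext => -[|n]; first by rewrite /W1op (As_expl _ hAs).
rewrite /W1op /W1E E3_add (G1op_expl _ hNs); last exact: (hH n.+1 cmp3).
case: n => [|n].
  rewrite (_ : dprev Dp k 1 = Dp (k 0%N)) // DpQ // (G1s_expl _ hTzs hNs hG1s) //.
  exact: (inDP_QE _ hTzs).
by rewrite (_ : dprev Dp k n.+2 = k n.+1) // (G1s_expl _ hTzs hNs hG1s).
Qed.

Lemma W2_expl {k : KsR} : inK Tzs k -> W2op Bop (G1op Ns) G1s Dp k = W2E alpha k.
Proof.
move=> hk; have hH := inK_inH hk.
apply/funext => -[|[|n]] //.
  rewrite /W2op DpQ // (G1op_expl _ hNs) //.
  exact: (inH_QE _ (hH 0%N) cmp3).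
rewrite (_ : W2op Bop (G1op Ns) G1s Dp k n.+2 = W1op As (G1op Ns) G1s Dp k n.+1) //.
by rewrite W1_expl.
Qed.

Lemma W3_expl {k : KsR} : inK Tzs k -> W3op Ps Dp k = W3E k.
Proof.
move=> hk; have hH := inK_inH hk.
apply/funext => -[|[|[|n]]] //.
  by rewrite /W3op (Ps_expl hPs).
by rewrite /W3op (_ : dprev Dp k 1 = Dp (k 0%N)) // DpQ.
Qed.

Lemma inK_W1E {k : KsR} : inK Tzs k -> inK Tzs (W1E alpha k).
Proof.
move=> hk; have hH := inK_inH hk; have ck := inK_cvg hk.
split; first exact: inH_W1E.
split; first by move=> n; exact: (inDP_E3 _ hTzs).
apply/cvgC_nH; apply: (@cvgS_bounded _ (sumS (fun n => nH (k n)))).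
  by move=> n; apply: nH_ge0; apply: inH_W1E.
move=> N; apply: le_trans (series_W1E_le _ _ N hH halpha) _.
by apply: series_le_sumS => // n; apply: nH_ge0.
Qed.

Lemma inK_W2E {k : KsR} : inK Tzs k -> inK Tzs (W2E alpha k).
Proof.
move=> hk; have hH := inK_inH hk; have ck := inK_cvg hk.
split; first exact: inH_0.
split; first by move=> n; rewrite W2E_S; case: n => [|n]; exact: (inDP_E3 _ hTzs).
apply/cvgC_nH; apply: (@cvgS_bounded _ (sumS (fun n => nH (k n)))).
  by move=> n; apply: nH_ge0; apply: inH_W2E.
move=> N; apply: le_trans (series_W2E_le _ _ N hH halpha) _.
by apply: series_le_sumS => // n; apply: nH_ge0.
Qed.

Lemma W3E_sums (k : KsR) : inK Tzs k ->
  cvgS (fun n => nH (W3E k n)) /\ sumS (fun n => nH (W3E k n)) = sumS (fun n => nH (k n)).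
Proof.
move=> hk; have hH := inK_inH hk; have ck := inK_cvg hk.
have c1 : cvgS (fun n => nH (k n.+1)) := proj1 (cvgS_shift _) ck.
have c3 : cvgS (fun n => nH (W3E k n.+3)) by [].
have c2 : cvgS (fun n => nH (W3E k n.+2)) := proj2 (cvgS_shift (fun n => nH (W3E k n.+2))) c3.
have c1' : cvgS (fun n => nH (W3E k n.+1)) := proj2 (cvgS_shift (fun n => nH (W3E k n.+1))) c2.
have c0 : cvgS (fun n => nH (W3E k n)) := proj2 (cvgS_shift (fun n => nH (W3E k n))) c1'.
split => //.
rewrite (sumS_shift _ c0) (sumS_shift _ c1') (sumS_shift _ c2) (sumS_shift _ ck).
rewrite (_ : W3E k 1 = 0) // nH_0 add0r addrA.
rewrite (_ : W3E k 0 = PsE (k 0%N)) // (_ : W3E k 2 = QE (k 0%N)) // nH_Ps_Q //.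
Qed.

Lemma inK_W3E {k : KsR} : inK Tzs k -> inK Tzs (W3E k).
Proof.
move=> hk; have hH := inK_inH hk; have [h0 [hD _]] := hk.
split; first exact: inH_PsE.
split; last by apply/cvgC_nH; have [] := W3E_sums _ hk.
move=> [|[|n]]; [exact: (inDP_0 _ hTzs) | exact: (inDP_QE _ hTzs) | exact: hD].
Qed.

Lemma ipK_embr (k : KsR) (h : HsR) : ipK k (embK h) = ipH (k 0%N) h.
Proof.
rewrite /ipK.
have e : forall n, n != 0%N -> ipH (k n) (embK h n) = 0 by move=> [|n] //; rewrite ipH_0r.
by have [_ ->] := @cvgC_single (fun n => ipH (k n) (embK h n)) 0 e.
Qed.
Lemma inK_embK (h : HsR) : inH h -> inK Tzs (embK h).
Proof.
move=> hh; split => //; split; first by move=> n; exact: (inDP_0 _ hTzs).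
have e : forall n, n != 0%N -> ipH (embK h n) (embK h n) = 0 by move=> [|n] //; rewrite ipH_0r.
by have [c _] := @cvgC_single (fun n => ipH (embK h n) (embK h n)) 0 e.
Qed.
Lemma inH_Pop (h : HsR) : inH h -> inH (Pop h).
Proof.
move=> hh i; case: (ord4_cases i) => ->; try exact: inL2_0.
  exact: (proj2 (inL2_shift (Tz (h cmp2))) (hh cmp2)).
exact: hh.
Qed.

Lemma main_in :
  (forall x, inH x -> Dp x = Qproj Tzs x) /\
  orth_projection_onto inH ipH (Qproj Tzs) (inDP Tzs) /\
  (forall x, inDP Tzs x -> inDP Tzs (G1op Ns x)) /\
  (exists M : R, forall x, inDP Tzs x ->
     ipH (G1op Ns x) (G1op Ns x) <= M%:C * ipH x x) /\
  (forall x, inH x -> As x - Bop (Ps x) = Dp (G1op Ns (Dp x))) /\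
  (forall x, inH x -> Bop x - Aalpha alpha (Ps x) = Dp (G2op (Dp x))) /\
  tetrablock_isometric_dilation inH ipH (inK Tzs) ipK embK
    (Aalpha alpha) Bop Pop
    (W1op As (G1op Ns) G1s Dp)
    (W2op Bop (G1op Ns) G1s Dp)
    (W3op Ps Dp).
Proof.
have hQ : forall x, inH x -> Qproj Tzs x = QE x := Qproj_expl hTzs.
split.
  by move=> x hx; rewrite DpQ // hQ.
split.
  split; first split.
  - by move=> x hx; rewrite hQ //; exact: inH_QE.
  - by move=> x y hx hy; rewrite !hQ //; exact: ipH_QE.
  split.
    by move=> x hx; rewrite (hQ x) // hQ ?QE_idem //; exact: inH_QE.
  move=> y; split.
    move=> hy; exists y; first exact: hy.1.
    by rewrite hQ ?(QE_DP _ hTzs) //; exact: hy.1.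
  by move=> [x hx <-]; rewrite hQ //; exact: (inDP_QE _ hTzs).
split.
  by move=> x hx; rewrite (G1op_expl _ hNs); [exact: (inDP_E3 _ hTzs) | exact: (hx.1 cmp3)].
split.
  exists 1 => x hx; rewrite (G1op_expl _ hNs); last exact: (hx.1 cmp3).
  have hxH := hx.1.
  rewrite !ipH_self nH_E3 normC2_b (_ : (1:R)%:C = 1) // mul1r lecR.
  apply: le_trans (le_trans (normC2_le_nL2 _ _ (hxH cmp3)) (nL2_le_nH _ _ hxH)).
  rewrite normC2_sq.
  have h1 := @s2_le1 alpha halpha; have h0 := s2_ge0 alpha.
  have := sq_ge0 (x cmp3 0%N o0); have := sq_ge0 (x cmp3 0%N o1); nra.
split.
  move=> x hx; rewrite (_ : Bop (Ps x) = 0) // subr0 (As_expl _ hAs) // (DpQ x hx).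
  rewrite (G1op_expl _ hNs); last exact: (inH_QE _ hx cmp3).
  by rewrite DpQ ?QE_E3 //; exact: inH_E3.
split.
  move=> x hx; rewrite (_ : Bop x = 0) // (_ : G2op (Dp x) = 0) // (Ps_expl hPs) //.
  rewrite (_ : Aalpha alpha (PsE x) = E3 (H1 alpha 0)) // H1_0 E3_0 subrr DpQ ?QE_0 //.
  exact: inH_0.
split.
  split.
    move=> k hk; rewrite (W1_expl hk) (W2_expl hk) (W3_expl hk).
    by split; [exact: inK_W1E | split; [exact: inK_W2E | exact: inK_W3E]].
  split.
    move=> k hk.
    have e12 : W1op As (G1op Ns) G1s Dp (W2op Bop (G1op Ns) G1s Dp k)
             = W2op Bop (G1op Ns) G1s Dp (W1op As (G1op Ns) G1s Dp k).
      rewrite (W2_expl hk) (W1_expl (inK_W2E hk)) (W1_expl hk) (W2_expl (inK_W1E hk)).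
      exact: W12_comm.
    have e13 : W1op As (G1op Ns) G1s Dp (W3op Ps Dp k) = W3op Ps Dp (W1op As (G1op Ns) G1s Dp k).
      rewrite (W3_expl hk) (W1_expl (inK_W3E hk)) (W1_expl hk) (W3_expl (inK_W1E hk)).
      exact: W13_comm.
    have e23 : W2op Bop (G1op Ns) G1s Dp (W3op Ps Dp k) = W3op Ps Dp (W2op Bop (G1op Ns) G1s Dp k).
      rewrite (W3_expl hk) (W2_expl (inK_W3E hk)) (W2_expl hk) (W3_expl (inK_W2E hk)).
      exact: W23_comm.
    by split; [exact: e12 | split; [exact: e13 | exact: e23]].
  split.
    move=> k hk; rewrite (W3_expl hk) !ipK_self.
    by have [_ ->] := W3E_sums _ hk.
  split.
    move=> k hk; rewrite (W1_expl hk) (W2_expl hk) !ipK_self !lecR.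
    have hH := inK_inH hk; have ck := inK_cvg hk.
    split; apply: sumS_le_partial => //.
    - exact: (inK_cvg (inK_W1E hk)).
    - by move=> N; apply: series_W1E_le.
    - exact: (inK_cvg (inK_W2E hk)).
    - by move=> N; apply: series_W2E_le.
  move=> x y hx hy; rewrite (W1_expl hx) (W2_expl hy) (W3_expl hx).
  apply: ipK_W1_W3W2 => //; [exact: inK_inH hx | exact: inK_inH hy | exact: inK_cvg hx | exact: inK_cvg hy].
split; first exact: inK_embK.
split.
  by move=> h h' _ _; rewrite ipK_embr.
move=> k h hk hh; have hk0 := inK_inH hk 0%N.
rewrite !ipK_embr; split; last split.
- rewrite (_ : W1op As (G1op Ns) G1s Dp k 0%N = As (k 0%N)) //.
  rewrite (ipH_conj h (As (k 0%N))) //; last exact: (proj1 hAs).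
  rewrite -(proj2 hAs) // -ipH_conj //.
  exact: inH_E3.
- by rewrite (_ : W2op Bop (G1op Ns) G1s Dp k 0%N = 0) // (_ : Bop h = 0) // ipH_0l ipH_0r.
- rewrite (_ : W3op Ps Dp k 0%N = Ps (k 0%N)) //.
  rewrite (ipH_conj h (Ps (k 0%N))) //; last exact: (proj1 hPs).
  rewrite -(proj2 hPs) // -ipH_conj //.
  exact: inH_Pop.
Qed.
End Final.
End Main.
Theorem mainTheorem6 (R : realType) (alpha : R[i]) (halpha : `|alpha| <= 1)
  (* Tzs = T_z^*, Ns = N_alpha^*, As = A_alpha^*, Ps = P^*,
   Dp = D_{P*} = (I - P P^* )^{1/2} (the positive square root),
   G1s = G1^* (adjoint in B(D_{P*})) *)
  (Tzs Ns : L2 -> L2) (As Ps Dp G1s : Hs -> Hs)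
  (hTzs : is_adjoint inL2 ipL2 Tz Tzs)
  (hNs : is_adjoint inL2 ipL2 (Nalpha alpha) Ns)
  (hAs : is_adjoint inH ipH (Aalpha alpha) As)
  (hPs : is_adjoint inH ipH Pop Ps)
  (hDp : positive_op inH ipH Dp)
  (hDp2 : forall x, inH x -> Dp (Dp x) = x - Pop (Ps x))
  (hG1s : is_adjoint (inDP Tzs) ipH (G1op Ns) G1s) :
  (* D_{P*} = I (+) I (+) (I - T_z T_z^* ) (+) 0, the orthogonal projection
     onto l2(C^2) (+) l2(C^2) (+) ker T_z^* (+) {0} *)
  (forall x, inH x -> Dp x = Qproj Tzs x) /\
  orth_projection_onto inH ipH (Qproj Tzs) (inDP Tzs) /\
  (* G1 is a bounded operator on D_{P*} *)
  (forall x, inDP Tzs x -> inDP Tzs (G1op Ns x)) /\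
  (exists M : R, forall x, inDP Tzs x ->
     ipH (G1op Ns x) (G1op Ns x) <= M%:C * ipH x x) /\
  (* A^* - B P^* = D G1 D  and  B^* - A P^* = D G2 D *)
  (forall x, inH x -> As x - Bop (Ps x) = Dp (G1op Ns (Dp x))) /\
  (forall x, inH x -> Bop x - Aalpha alpha (Ps x) = Dp (G2op (Dp x))) /\
  (* (W1, W2, W3) is a tetrablock isometric dilation of (A^*, B^*, P^* ),
     the adjoints of A^*, B^*, P^* are A, B = 0, P *)
  tetrablock_isometric_dilation inH ipH (inK Tzs) ipK embK
    (Aalpha alpha) Bop Pop
    (W1op As (G1op Ns) G1s Dp)
    (W2op Bop (G1op Ns) G1s Dp)
    (W3op Ps Dp).
Proof.
exact: (@main_in R alpha halpha Tzs Ns As Ps Dp G1s hTzs hNs hAs hPs hDp hDp2 hG1s).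
Qed.
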